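(* Let $W,V$ be B-DMCs on a common output alphabet. Let $B_1,B_2,\dots$ be i.i.d. uniform on $\{-,+\}$, set $i_0=1$ and $i_{n}=2i_{n-1}-1$ if $B_n=-$, $i_n=2i_{n-1}$ if $B_n=+$, and let $X_n=\mathbb P_W\big[L_{V_{2^n}^{(i_n)}}(y_1^{2^n})=1\big]$. Then $(X_n)_{n\ge0}$ is a submartingale with respect to the filtration generated by $B_1,B_2,\dots$, taking values in $[0,1]$; it converges almost surely, and its almost sure limit takes values in $\{0,1\}$.
   Context: A B-DMC $W:\{0,1\}\to\mathcal Y$ is given by transition probabilities $W(y|x)$, $\mathcal Y$ finite; $L_W(y)=W(y|1)/W(y|0)$. For a B-DMC $W$: $W^-(y_1y_2|u_1)=\sum_{u_2}\tfrac12W(y_1|u_1\oplus u_2)W(y_2|u_2)$, $W^+(y_1y_2u_1|u_2)=\tfrac12W(y_1|u_1\oplus u_2)W(y_2|u_2)$. Synthetic channels: $W_1^{(1)}=W$, $W_{2N}^{(2i-1)}=(W_N^{(i)})^-$, $W_{2N}^{(2i)}=(W_N^{(i)})^+$; an output of $W_N^{(i)}$ is written $(y_1^N,u_1^{i-1})$ as in Arıkan's construction, and $L_{V_N^{(i)}}(y_1^N):=L_{V_N^{(i)}}(y_1^N,0_1^{i-1})$. These satisfy, with $L_1=L_{V_N^{(i)}}(y_1^N)$, $L_2=L_{V_N^{(i)}}(y_{N+1}^{2N})$: $L_{V_{2N}^{(2i-1)}}(y_1^{2N})=\frac{L_1+L_2}{1+L_1L_2}$, $L_{V_{2N}^{(2i)}}(y_1^{2N})=L_1L_2$.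 Notation: $W(y_1^N|0_1^N)=\prod_{j}W(y_j|0)$ and $\mathbb P_W[E]=\sum_{y_1^N}W(y_1^N|0_1^N)\mathbf 1\{E\}$. *)

(* Defs.v *)
From Stdlib Require Import Reals.
From mathcomp Require Import all_boot.
Set Implicit Arguments.
Unset Strict Implicit.
Unset Printing Implicit Defensive.

Local Open Scope R_scope.

(* Conventions: a channel is W : bool -> Y -> R with W x y = W(y|x);
   input bit false = 0, true = 1.  Branch bit false = '-', true = '+'. *)

Definition is_BDMC (Y : finType) (W : bool -> Y -> R) : Prop :=
  (forall x y, 0 <= W x y) /\ (forall x, \big[Rplus/0]_(y : Y) W x y = 1).

(* W^-(y1 y2 | u1) = sum_{u2} 1/2 W(y1|u1 xor u2) W(y2|u2) *)
Definition ch_minus (O : Type) (C : bool -> O -> R) : bool -> (O * O)%type -> R :=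
  fun u1 o => / 2 * C (xorb u1 false) o.1 * C false o.2
            + / 2 * C (xorb u1 true) o.1 * C true o.2.

(* W^+(y1 y2 u1 | u2) = 1/2 W(y1|u1 xor u2) W(y2|u2) *)
Definition ch_plus (O : Type) (C : bool -> O -> R) : bool -> (O * O * bool)%type -> R :=
  fun u2 o => / 2 * C (xorb o.2 u2) o.1.1 * C u2 o.1.2.

(* Output alphabet of the synthetic channel.  The branch list rs is given in
   REVERSE order: rs = [:: B_n; ...; B_1]  (head = last applied transform). *)
Fixpoint Out (Y : Type) (rs : seq bool) : Type :=
  match rs with
  | [::] => Y
  | b :: rs' => if b then (Out Y rs' * Out Y rs' * bool)%type
                else (Out Y rs' * Out Y rs')%type
  end.

(* synth W [:: B_n; ...; B_1] = W_{2^n}^{(i_n)} = (...(W^{B_1})...)^{B_n} *)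
Fixpoint synth (Y : Type) (W : bool -> Y -> R) (rs : seq bool)
  : bool -> Out Y rs -> R :=
  match rs as rs0 return bool -> Out Y rs0 -> R with
  | [::] => W
  | b :: rs' =>
      if b as b0 return bool -> Out Y (b0 :: rs') -> R
      then ch_plus (@synth Y W rs') else ch_minus (@synth Y W rs')
  end.

(* pw n = 2^n (defined so that pw (n+1) = pw n + pw n definitionally). *)
Fixpoint pw (n : nat) : nat :=
  match n with 0 => 1%N | S m => (pw m + pw m)%N end.

(* The synthetic-channel output (y_1^N, 0_1^{i-1}) built from y_1^N, N = 2^n:
   first half of y feeds the first copy, second half the second copy, and all
   previously decided bits u are 0. *)
Fixpoint emb (Y : Type) (rs : seq bool) : ('I_(pw (size rs)) -> Y) -> Out Y rs :=
  match rs as rs0 return ('I_(pw (size rs0)) -> Y) -> Out Y rs0 with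
  | [::] => fun g => g ord0
  | b :: rs' => fun g =>
      let l := @emb Y rs' (fun i => g (lshift (pw (size rs')) i)) in
      let r := @emb Y rs' (fun i => g (rshift (pw (size rs')) i)) in
      if b as b0 return Out Y (b0 :: rs') then (l, r, false) else (l, r)
  end.

(* X for the branch [:: B_n; ...; B_1]:
   P_W[ L_{V_{2^n}^{(i_n)}}(y_1^{2^n}) = 1 ]
   = sum_{y in Y^N} prod_j W(y_j|0) * 1{ V(y,0|1) = V(y,0|0) }.
   The event L = 1 is read as V(.|1) = V(.|0) (cross-multiplied form). *)
Definition Xr (Y : finType) (W V : bool -> Y -> R) (rs : seq bool) : R :=
  \big[Rplus/0]_(y : {ffun 'I_(pw (size rs)) -> Y})
     ((\big[Rmult/1]_(j : 'I_(pw (size rs))) W false (y j)) *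
      (if Req_EM_T (@synth Y V rs true (@emb Y rs y)) (@synth Y V rs false (@emb Y rs y))
       then 1 else 0)).

(* Sample path: omega k = B_{k+1}.  revpre omega n = [:: B_n; ...; B_1]. *)
Fixpoint revpre (omega : nat -> bool) (n : nat) : seq bool :=
  match n with 0 => [::] | S m => omega m :: revpre omega m end.

Definition extends (omega : nat -> bool) (p : seq bool) : Prop :=
  forall k, (k < size p)%N -> omega k = nth false p k.

(* Null set for the i.i.d. uniform (fair coin) product measure on {-,+}^N:
   coverable by countably many cylinders of total measure <= eps, any eps>0. *)
Definition coin_null (A : (nat -> bool) -> Prop) : Prop :=
  forall eps, 0 < eps ->
    exists c : nat -> seq bool,
      (forall omega, A omega -> exists k, extends omega (c k)) /\
      (forall K, sum_f_R0 (fun k => pow (/ 2) (size (c k))) K <= eps).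

Definition almost_surely (P : (nat -> bool) -> Prop) : Prop :=
  coin_null (fun omega => ~ P omega).

(* Main.v *)
From HB Require Import structures.
Require Import Defs.
From Stdlib Require Import Reals Lra Lia Classical.
From mathcomp Require Import all_boot zify.
Set Implicit Arguments.
Unset Strict Implicit.
Local Open Scope R_scope.


Lemma RplusA : associative Rplus. Proof. move=>*; rewrite Rplus_assoc //. Qed.
Lemma RmultA : associative Rmult. Proof. move=>*; rewrite Rmult_assoc //. Qed.
HB.instance Definition _ := Monoid.isComLaw.Build R 0 Rplus RplusA Rplus_comm Rplus_0_l.
HB.instance Definition _ := Monoid.isComLaw.Build R 1 Rmult RmultA Rmult_comm Rmult_1_l.
HB.instance Definition _ := Monoid.isMulLaw.Build R 0 Rmult Rmult_0_l Rmult_0_r.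
HB.instance Definition _ := Monoid.isAddLaw.Build R Rmult Rplus Rmult_plus_distr_r Rmult_plus_distr_l.



Section PA.
Variables (Y : finType) (W V : bool -> Y -> R).
Hypothesis hW : is_BDMC W.

Definition PP N (y : {ffun 'I_N -> Y}) := \big[Rmult/1]_(j : 'I_N) W false (y j).
Definition Ind rs (o : Out Y rs) : R :=
  if Req_EM_T (@synth Y V rs true o) (@synth Y V rs false o) then 1 else 0.

Lemma Xr_eq rs : Xr W V rs = \big[Rplus/0]_(y : {ffun 'I_(pw (size rs)) -> Y}) (PP y * Ind (@emb Y rs y)).
Proof. by []. Qed.

Lemma emb_ext rs (g g' : 'I_(pw (size rs)) -> Y) : (forall i, g i = g' i) -> @emb Y rs g = @emb Y rs g'.
Proof.
elim: rs g g' => [|b rs IH] g g' H /=; first by rewrite H.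
rewrite (IH (fun i => g (lshift _ i)) (fun i => g' (lshift _ i))) //.
rewrite (IH (fun i => g (rshift _ i)) (fun i => g' (rshift _ i))) //.
Qed.

Lemma PP_ge0 N (y : {ffun 'I_N -> Y}) : 0 <= PP y.
Proof.
rewrite /PP; apply: (big_ind (fun x => 0 <= x)); first lra.
  by move=> x z; apply: Rmult_le_pos.
by move=> i _; case: hW.
Qed.

Lemma PP_sum N : \big[Rplus/0]_(y : {ffun 'I_N -> Y}) PP y = 1.
Proof.
rewrite /PP -(bigA_distr_bigA (fun (i : 'I_N) (j : Y) => W false j)).
rewrite (eq_bigr (fun _ => 1)); first by rewrite big1_eq.
by move=> i _; case: hW.
Qed.

Lemma Ind_01 rs o : 0 <= @Ind rs o <= 1.
Proof. rewrite /Ind. destruct (Req_EM_T _ _); simpl; lra. Qed.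

Definition glue N (y1 y2 : {ffun 'I_N -> Y}) : {ffun 'I_(N + N) -> Y} :=
  [ffun j => match split j with inl i => y1 i | inr i => y2 i end].

Lemma glue_l N (y1 y2 : {ffun 'I_N -> Y}) i : glue y1 y2 (lshift N i) = y1 i.
Proof. by rewrite ffunE (unsplitK (inl _ i)). Qed.
Lemma glue_r N (y1 y2 : {ffun 'I_N -> Y}) i : glue y1 y2 (rshift N i) = y2 i.
Proof. by rewrite ffunE (unsplitK (inr _ i)). Qed.

Lemma sum_split N (F : {ffun 'I_(N + N) -> Y} -> R) :
  \big[Rplus/0]_(y : {ffun 'I_(N + N) -> Y}) F y =
  \big[Rplus/0]_(y1 : {ffun 'I_N -> Y}) \big[Rplus/0]_(y2 : {ffun 'I_N -> Y}) F (glue y1 y2).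
Proof.
rewrite pair_bigA /=.
rewrite (reindex (fun p : {ffun 'I_N -> Y} * {ffun 'I_N -> Y} => glue p.1 p.2)) //=.
exists (fun y : {ffun 'I_(N+N) -> Y} => ([ffun i => y (lshift N i)], [ffun i => y (rshift N i)])).
  move=> [y1 y2] _ /=; congr pair; apply/ffunP => i; rewrite ffunE ?glue_l ?glue_r //.
move=> y _; apply/ffunP => j; rewrite ffunE.
rewrite -[in RHS](splitK j); by case: (split j) => i /=; rewrite ffunE.
Qed.

Lemma PP_glue N (y1 y2 : {ffun 'I_N -> Y}) : PP (glue y1 y2) = PP y1 * PP y2.
Proof.
rewrite /PP big_split_ord /=.
by congr Rmult; apply: eq_bigr => i _; rewrite ?glue_l ?glue_r.
Qed.


Lemma emb_glue0 rs (y1 y2 : {ffun 'I_(pw (size rs)) -> Y}) :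
  @emb Y (false :: rs) (glue y1 y2) = (@emb Y rs y1, @emb Y rs y2).
Proof.
rewrite /=; congr pair; apply: emb_ext => i; by rewrite ?glue_l ?glue_r.
Qed.
Lemma emb_glue1 rs (y1 y2 : {ffun 'I_(pw (size rs)) -> Y}) :
  @emb Y (true :: rs) (glue y1 y2) = (@emb Y rs y1, @emb Y rs y2, false).
Proof.
rewrite /=; congr (pair (pair _ _) _); apply: emb_ext => i; by rewrite ?glue_l ?glue_r.
Qed.

Lemma Ind_minus rs o1 o2 : @Ind (false :: rs) (o1, o2) = Ind o1 + Ind o2 - Ind o1 * Ind o2.
Proof.
rewrite /Ind /= /ch_minus /=.
set a1 := synth V false o1; set b1 := synth V true o1.
set a2 := synth V false o2; set b2 := synth V true o2.
destruct (Req_EM_T b1 a1) as [e1|n1]; destruct (Req_EM_T b2 a2) as [e2|n2];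
destruct (Req_EM_T _ _) as [e|n]; simpl; try lra.
- exfalso; apply: n; rewrite e1; lra.
- exfalso; apply: n; rewrite e1; lra.
- exfalso; apply: n; rewrite e2; lra.
- exfalso.
  have : (b1 - a1) * (b2 - a2) = 0 by nra.
  case/Rmult_integral => ?; [apply: n1 | apply: n2]; lra.
Qed.

Lemma Ind_plus rs o1 o2 : Ind o1 * Ind o2 <= @Ind (true :: rs) (o1, o2, false).
Proof.
have := Ind_01 (rs := true :: rs) (o1, o2, false).
rewrite /Ind /= /ch_plus /=.
destruct (Req_EM_T (synth V true o1) _) as [e1|n1];
destruct (Req_EM_T (synth V true o2) _) as [e2|n2]; simpl; try lra.
destruct (Req_EM_T _ _) as [e|n]; simpl; try lra.
exfalso; apply: n; rewrite e1 e2; lra.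
Qed.

Lemma sum_prod N (f g : {ffun 'I_N -> Y} -> R) :
  \big[Rplus/0]_(y1 : {ffun 'I_N -> Y}) \big[Rplus/0]_(y2 : {ffun 'I_N -> Y}) (f y1 * g y2) =
  (\big[Rplus/0]_y1 f y1) * (\big[Rplus/0]_y2 g y2).
Proof.
rewrite big_distrl /=; apply: eq_bigr => y1 _; by rewrite big_distrr.
Qed.

Lemma alg1 (a b c d : R) : a*b*(c+d-c*d) = a*c*b + a*(b*d) + (-1*(a*c))*(b*d).
Proof. ring. Qed.

Lemma Xr_minus rs : Xr W V (false :: rs) = 2 * Xr W V rs - Xr W V rs * Xr W V rs.
Proof.
rewrite !Xr_eq sum_split.
set p := \big[Rplus/0]_(y : {ffun 'I_(pw (size rs)) -> Y}) (PP y * Ind (emb (rs:=rs) y)).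
transitivity (\big[Rplus/0]_(y1 : {ffun 'I_(pw (size rs)) -> Y}) \big[Rplus/0]_(y2 : {ffun 'I_(pw (size rs)) -> Y})
   ((PP y1 * Ind (emb (rs:=rs) y1)) * PP y2 + PP y1 * (PP y2 * Ind (emb (rs:=rs) y2))
    + ((-1) * (PP y1 * Ind (emb (rs:=rs) y1))) * (PP y2 * Ind (emb (rs:=rs) y2)))).
  apply: eq_bigr => y1 _; apply: eq_bigr => y2 _.
  rewrite PP_glue.
  have -> : @emb Y (false :: rs) (glue y1 y2) = (emb (rs:=rs) y1, emb (rs:=rs) y2)
    by exact: emb_glue0.
  rewrite Ind_minus; apply: alg1.
under eq_bigr => y1 _ do rewrite !big_split.
rewrite !big_split /= !sum_prod PP_sum -big_distrr /= -/p.
ring.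
Qed.

Lemma alg2 (a b c d : R) : a*c*(b*d) = a*b*(c*d).
Proof. ring. Qed.

Lemma Xr_plus rs : Xr W V rs * Xr W V rs <= Xr W V (true :: rs).
Proof.
rewrite !Xr_eq sum_split -sum_prod.
apply: (big_ind2 (fun a b => a <= b)); [lra | move=> *; lra | move=> y1 _].
apply: (big_ind2 (fun a b => a <= b)); [lra | move=> *; lra | move=> y2 _].
rewrite PP_glue.
have -> : @emb Y (true :: rs) (glue y1 y2) = (emb (rs:=rs) y1, emb (rs:=rs) y2, false)
  by exact: emb_glue1.
have := Ind_plus (emb (rs:=rs) y1) (emb (rs:=rs) y2).
have := PP_ge0 y1; have := PP_ge0 y2.
move=> h1 h2 h3.
have h4 := Rmult_le_compat_l (PP y1 * PP y2) _ _ (Rmult_le_pos _ _ h2 h1) h3.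
apply: Rle_trans h4; right; apply: alg2.
Qed.

Lemma Xr_01 rs : 0 <= Xr W V rs <= 1.
Proof.
rewrite Xr_eq; split.
  apply: (big_ind (fun a => 0 <= a)); [lra | move=> *; lra | move=> y _].
  apply: Rmult_le_pos; [exact: PP_ge0 | case: (Ind_01 (emb y)) => //].
rewrite -(PP_sum (pw (size rs))).
apply: (big_ind2 (fun a b => a <= b)); [lra | move=> *; lra | move=> y _].
have := PP_ge0 y; case: (Ind_01 (emb y)) => h1 h2 h3.
have := Rmult_le_compat_l (PP y) _ _ h3 h2; cbv beta; rewrite Rmult_1_r; exact.
Qed.

End PA.


Lemma terms_to0 (ee : nat -> R) (B : R) :
  (forall n, 0 <= ee n) -> (forall n, sum_f_R0 ee n <= B) ->
  forall eps, 0 < eps -> exists N, forall n, (N <= n)%coq_nat -> ee n < eps.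
Proof.
move=> h0 hB eps he.
have gr : Un_growing (sum_f_R0 ee) by move=> n /=; have := h0 (S n); lra.
have ub : has_ub (sum_f_R0 ee) by exists B => x [i ->]; apply: hB.
have [N HN] := CV_Cauchy _ (growing_cv _ gr ub) eps he.
exists (S N) => n hn.
destruct n as [|n]; first lia.
have := HN (S n) n ltac:(lia) ltac:(lia).
rewrite /Rdist /=.
have := h0 (S n).
move=> h1 h2.
rewrite Rabs_right in h2; lra.
Qed.

Lemma stays_low (x ee : nat -> R) (N : nat) :
  (forall n, 0 <= x n <= 1) ->
  (forall n, (x (S n) - x n) ^ 2 <= 2 * ee n) ->
  (forall n, (x n * (1 - x n)) ^ 2 <= 2 * ee n) ->
  (forall eps, 0 < eps -> exists N, forall n, (N <= n)%coq_nat -> ee n < eps) ->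
  (forall n, (N <= n)%coq_nat -> ee n < / 512) ->
  x N < / 4 -> Un_cv x 0.
Proof.
move=> h01 hst hpol hto hN hxN.
have low : forall k, x (N + k)%coq_nat < / 4.
  elim=> [|k IH]; first by rewrite Nat.add_0_r.
  have e1 := hN (N + k)%coq_nat ltac:(lia).
  have s1 := hst (N + k)%coq_nat.
  have p1 := hpol (N + k + 1)%coq_nat.
  have e2 := hN (N + k + 1)%coq_nat ltac:(lia).
  have b1 := h01 (N + k)%coq_nat. have b2 := h01 (N + k + 1)%coq_nat.
  rewrite (_ : (N + k + 1)%coq_nat = S (N + k)) in p1 e2 b2; last lia.
  rewrite (_ : (N + k.+1)%coq_nat = S (N + k)); last lia.
  set a := x (N + k)%coq_nat in IH s1 b1 *. set b := x (S (N + k)) in s1 p1 b2 *.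
  have hb : b - a < / 8 by nra.
  nra.
move=> eps he.
have [d [hd dle]] : exists d, 0 < d /\ d <= eps.
  exists (Rmin eps (/ 2)); split; [apply: Rmin_pos; lra | apply: Rmin_l].
have hdd : 0 < d * d / 4 by have := Rmult_lt_0_compat _ _ hd hd; lra.
have [N1 HN1] := hto (d * d / 4) hdd.
exists (N + N1)%coq_nat => n hn.
rewrite /Rdist Rminus_0_r.
have [k Hk] : exists k, n = (N + k)%coq_nat by exists (n - N)%coq_nat; lia.
subst n.
have l := low k.
have b := h01 (N + k)%coq_nat.
have p := hpol (N + k)%coq_nat.
have q := HN1 (N + k)%coq_nat ltac:(lia).
rewrite Rabs_right; last lra.
set a := x (N + k)%coq_nat in l b p *.
set f := ee (N + k)%coq_nat in p q.
have : (a * (1 - a)) ^ 2 < d * d / 2 by lra.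
move=> h.
have h2 : a * (3/4) <= a * (1 - a) by nra.
nra.
Qed.

Lemma path_conv (x ee : nat -> R) (B : R) :
  (forall n, 0 <= x n <= 1) ->
  (forall n, 0 <= ee n) ->
  (forall n, (x (S n) - x n) ^ 2 <= 2 * ee n) ->
  (forall n, (x n * (1 - x n)) ^ 2 <= 2 * ee n) ->
  (forall n, sum_f_R0 ee n <= B) ->
  exists l, Un_cv x l /\ (l = 0 \/ l = 1).
Proof.
move=> h01 h0 hst hpol hB.
have hto := terms_to0 h0 hB.
have [N HN] := hto (/ 512) ltac:(lra).
have p := hpol N. have e := HN N (le_n _). have b := h01 N.
have [lo|hi] : x N < / 4 \/ 1 - x N < / 4.
  case: (Rlt_or_le (x N) (/ 4)) => h; [by left | right].
  nra.
- exists 0; split; last by left.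
  exact: (stays_low h01 hst hpol hto HN lo).
- exists 1; split; last by right.
  have H : Un_cv (fun n => 1 - x n) 0.
  apply: (@stays_low (fun n => 1 - x n) ee N).
  + move=> n; have := h01 n; lra.
  + move=> n; apply: Rle_trans (hst n); right; ring.
  + move=> n; apply: Rle_trans (hpol n); right; ring.
  + exact: hto.
  + exact: HN.
  + exact: hi.
  move=> eps he; have [M HM] := H eps he.
  exists M => n hn; have := HM n hn; rewrite /Rdist.
  by rewrite (_ : 1 - x n - 0 = - (x n - 1)) ?Rabs_Ropp; last ring.
Qed.


Lemma sum_S (f : nat -> R) m : sum_f_R0 f (S m) = f 0%nat + sum_f_R0 (fun i => f (S i)) m.
Proof.
elim: m => [|m IH]; first by simpl; lra.
change (sum_f_R0 f (S (S m))) with (sum_f_R0 f (S m) + f (S (S m))).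
rewrite IH.
change (sum_f_R0 (fun i => f (S i)) (S m)) with (sum_f_R0 (fun i => f (S i)) m + f (S (S m))).
lra.
Qed.

Lemma sum_le (f g : nat -> R) m : (forall i, f i <= g i) -> sum_f_R0 f m <= sum_f_R0 g m.
Proof. move=> h; elim: m => [|m IH] /=; [exact: h | have := h (S m); lra]. Qed.

Lemma sum_mono (f : nat -> R) m n : (forall i, 0 <= f i) -> (m <= n)%nat -> sum_f_R0 f m <= sum_f_R0 f n.
Proof.
move=> h /subnKC <-; elim: (n - m)%nat => [|k IH]; first by rewrite addn0; lra.
rewrite addnS /=; have := h (m + k).+1; lra.
Qed.

Lemma sum_geom N : sum_f_R0 (fun k => (/ 2) ^ k) N = 2 - (/ 2) ^ N.
Proof. elim: N => [|N IH]; first by simpl; lra.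
change (sum_f_R0 (fun k => (/ 2) ^ k) (S N)) with (sum_f_R0 (fun k => (/ 2) ^ k) N + (/2) ^ (S N)).
rewrite IH; change ((/2)^(S N)) with (/2 * (/2)^N); lra. Qed.

Lemma sum_count n c q : 0 <= q ->
  sum_f_R0 (fun i => if (i < c)%nat then q else 0) n = INR (minn n.+1 c) * q.
Proof.
move=> hq; elim: n => [|n IH].
  case: c => [|c]; first by rewrite minn0 /=; lra.
  rewrite (_ : minn 1 c.+1 = 1%nat); last lia.
  rewrite /=; lra.
change (sum_f_R0 (fun i => if (i < c)%nat then q else 0) (S n)) with
  (sum_f_R0 (fun i => if (i < c)%nat then q else 0) n + (if (n.+1 < c)%nat then q else 0)).
rewrite IH.
case: (boolP (n.+1 < c)%nat) => h.
  rewrite (_ : minn n.+2 c = (minn n.+1 c).+1); last lia.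
  rewrite S_INR; lra.
rewrite (_ : minn n.+2 c = minn n.+1 c); last lia.
lra.
Qed.

Lemma pow2E m : Nat.pow 2 m = (2 ^ m)%nat.
Proof. elim: m => [|m IH] //=; rewrite expnS -IH; lia. Qed.

Lemma N_le_pow N : (N <= Nat.pow 2 N.+1 - 2)%nat.
Proof.
elim: N => [|n IHn] //.
have : (0 < 2 ^ n)%nat by rewrite expn_gt0.
have : Nat.pow 2 n.+1 = (2 * 2 ^ n)%nat by rewrite pow2E expnS.
have : Nat.pow 2 n.+2 = (2 * Nat.pow 2 n.+1)%nat by [].
lia.
Qed.

Definition blk k := Nat.log2 k.+1.
Definition off k := (k.+1 - Nat.pow 2 (blk k))%nat.

Lemma blk_spec m i : (i < Nat.pow 2 m)%nat ->
  blk (Nat.pow 2 m - 1 + i) = m /\ off (Nat.pow 2 m - 1 + i) = i.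
Proof.
move=> hi.
have p1 : (0 < Nat.pow 2 m)%nat by rewrite pow2E expn_gt0.
have hb : blk (Nat.pow 2 m - 1 + i) = m.
  rewrite /blk; apply: Nat.log2_unique; first lia.
  rewrite Nat.pow_succ_r; last lia.
  split; apply/leP; lia.
split=> //; rewrite /off hb; lia.
Qed.

Lemma rev_revpre (omega : nat -> bool) n : rev (revpre omega n) = mkseq omega n.
Proof.
elim: n => [|n IH] //=.
rewrite rev_cons IH /mkseq -addn1 iotaD map_cat cats1 //.
Qed.

Lemma extends_revpre (omega : nat -> bool) n : extends omega (rev (revpre omega n)).
Proof.
move=> k; rewrite rev_revpre size_mkseq => hk; by rewrite nth_mkseq.
Qed.

Section Cover.
Variable H : seq bool -> bool.

Fixpoint mu (rs : seq bool) (m : nat) : R :=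
  if H rs then 1 else
  match m with 0 => 0 | S m' => (mu (false :: rs) m' + mu (true :: rs) m') / 2 end.

Fixpoint Lvl (rs : seq bool) (m : nat) : seq (seq bool) :=
  match m with
  | 0 => if H rs then [:: rs] else [::]
  | S m' => if H rs then [::] else Lvl (false :: rs) m' ++ Lvl (true :: rs) m'
  end.

Lemma Lvl_mu m rs : sum_f_R0 (fun j => INR (size (Lvl rs j)) * (/ 2) ^ j) m = mu rs m.
Proof.
elim: m rs => [|m IH] rs.
  rewrite /=; case: (H rs) => /=; lra.
rewrite sum_S /=.
case: (H rs) => /=.
  rewrite (PartSum.sum_eq _ (fun _ => 0)); last by move=> i _; rewrite /= Rmult_0_l.
  rewrite (_ : sum_f_R0 (fun _ => 0) m = 0); first lra.
  elim: m {IH} => [|m IHm] /=; lra.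
rewrite -IH -IH.
rewrite (PartSum.sum_eq _ (fun j => (INR (size (Lvl (false :: rs) j)) * (/ 2) ^ j + INR (size (Lvl (true :: rs) j)) * (/ 2) ^ j) * / 2)).
  rewrite -scal_sum sum_plus; lra.
move=> i _; rewrite size_cat plus_INR /=; ring.
Qed.

Lemma Lvl_size m rs s : s \in Lvl rs m -> size s = (size rs + m)%nat.
Proof.
elim: m rs => [|m IH] rs /=.
  by case: (H rs); rewrite ?inE // => /eqP ->; rewrite addn0.
case: (H rs) => //; rewrite mem_cat => /orP [] /IH ->; by rewrite /= addSnnS.
Qed.

Lemma Lvl_card m rs : (size (Lvl rs m) <= 2 ^ m)%nat.
Proof.
elim: m rs => [|m IH] rs /=; first by case: (H rs).
case: (H rs) => //; rewrite size_cat expnS.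
have := IH (false :: rs); have := IH (true :: rs); lia.
Qed.

Lemma Lvl_cover (omega : nat -> bool) m n :
  H (revpre omega (n + m)) -> exists j, (j <= m)%nat /\ revpre omega (n + j) \in Lvl (revpre omega n) j.
Proof.
elim: m n => [|m IH] n.
  rewrite addn0 => h; exists 0%nat; split=> //; by rewrite addn0 /= h inE.
move=> h.
case hH: (H (revpre omega n)).
  exists 0%nat; split=> //; by rewrite addn0 /= hH inE.
rewrite addnS -addSn in h.
have [j [hj hin]] := IH n.+1 h.
exists j.+1; split; first by [].
rewrite /= hH mem_cat -addSnnS.
move: hin => /=; case: (omega n) => ->; by rewrite ?orbT.
Qed.

Lemma cover (delta eps : R) : (forall m, mu [::] m <= delta) -> 0 < eps ->
  exists c : nat -> seq bool,
    (forall omega, (exists n, H (revpre omega n)) -> exists k, extends omega (c k)) /\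
    (forall N, sum_f_R0 (fun k => (/ 2) ^ (size (c k))) N <= delta + eps).
Proof.
move=> hmu he.
have [L HL] := pow_lt_1_zero (/ 2) ltac:(rewrite Rabs_right; lra) (eps / 2) ltac:(lra).
have hL := HL L (le_n _); rewrite Rabs_right in hL; last by apply: Rle_ge; apply: pow_le; lra.
pose cnt m := size (Lvl [::] m).
pose c k := if (off k < cnt (blk k))%nat then rev (nth [::] (Lvl [::] (blk k)) (off k))
            else nseq (k + L) false.
exists c; split.
  move=> omega [n hn].
  have [j [_ hj]] := @Lvl_cover omega n 0 ltac:(by rewrite add0n).
  rewrite add0n /= in hj.
  pose i := index (revpre omega j) (Lvl [::] j).
  have hi : (i < cnt j)%nat by rewrite /i /cnt index_mem.
  have hi2 : (i < Nat.pow 2 j)%nat by rewrite pow2E; apply: leq_trans hi (Lvl_card _ _).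
  have [hb ho] := blk_spec hi2.
  exists (Nat.pow 2 j - 1 + i)%nat.
  rewrite /c hb ho hi /i nth_index //.
  exact: extends_revpre.
move=> N.
pose r k := if (off k < cnt (blk k))%nat then (/ 2) ^ (blk k) else 0.
have r0 : forall k, 0 <= r k by move=> k; rewrite /r; case: ifP => _; [apply: pow_le|]; lra.
have h1 : sum_f_R0 (fun k => (/ 2) ^ (size (c k))) N <=
          sum_f_R0 r N + sum_f_R0 (fun k => (/ 2) ^ (k + L)) N.
  rewrite -sum_plus; apply: sum_le => k.
  rewrite /c /r; case: ifP => h.
    rewrite size_rev (@Lvl_size (blk k) [::]) ?mem_nth //= add0n.
    have := pow_le (/2) (k + L) ltac:(lra); lra.
  rewrite size_nseq; lra.
have h2 : sum_f_R0 (fun k => (/ 2) ^ (k + L)) N <= eps.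
  rewrite (PartSum.sum_eq _ (fun k => (/ 2) ^ k * (/ 2) ^ L)); last by move=> i _; rewrite pow_add.
  rewrite -scal_sum sum_geom.
  have := pow_le (/2) N ltac:(lra); have := pow_le (/2) L ltac:(lra); nra.
have blk0 : forall M, sum_f_R0 r (Nat.pow 2 M.+1 - 2) <= sum_f_R0 (fun m => INR (cnt m) * (/ 2) ^ m) M.
  elim=> [|M IH].
    rewrite /= /r /blk /off /=.
    case: (cnt 0%nat) => [|n] /=; first lra.
    change (1 <= INR n.+1 * 1); rewrite Rmult_1_r; apply: (le_INR 1); apply/leP; lia.
  have p1 : (1 < Nat.pow 2 M.+1)%nat.
    have : (0 < 2 ^ M)%nat by rewrite expn_gt0.
    rewrite pow2E expnS; lia.
  have e1 : Nat.pow 2 M.+2 = (2 * Nat.pow 2 M.+1)%nat by [].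
  rewrite e1.
  move: IH p1; set P := Nat.pow 2 M.+1 => IH p1.
  rewrite (tech2 r (P - 2) (2 * P - 2)); last by apply/ltP; lia.
  have -> : ((2 * P - 2) - S (P - 2))%coq_nat = (P - 1)%nat by lia.
  change (sum_f_R0 (fun m => INR (cnt m) * (/ 2) ^ m) M.+1) with
    (sum_f_R0 (fun m => INR (cnt m) * (/ 2) ^ m) M + INR (cnt M.+1) * (/ 2) ^ M.+1).
  rewrite (PartSum.sum_eq (fun i => r (S (P - 2) + i)%coq_nat) (fun i => if (i < cnt M.+1)%nat then (/ 2) ^ M.+1 else 0)).
    rewrite sum_count; last by apply: pow_le; lra.
    have : INR (minn (P - 1).+1 (cnt M.+1)) <= INR (cnt M.+1).
      apply: le_INR; apply/leP; lia.
    have := pow_le (/2) M.+1 ltac:(lra).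
    move=> h4 h5.
    have := Rmult_le_compat_r _ _ _ h4 h5.
    lra.
  move=> i /leP hi.
  have hi2 : (i < P)%nat by lia.
  have [hb ho] := blk_spec hi2.
  rewrite (_ : (S (P - 2) + i)%coq_nat = (P - 1 + i)%nat); last lia.
  by rewrite /r hb ho.
have h3 : sum_f_R0 r N <= delta.
  apply: Rle_trans (sum_mono r0 (N_le_pow N)) _.
  apply: Rle_trans (blk0 N) _.
  rewrite /cnt Lvl_mu; exact: hmu.
lra.
Qed.

End Cover.

Section Main.
Variable X : seq bool -> R.
Hypothesis h01 : forall rs, 0 <= X rs <= 1.
Hypothesis hsub : forall rs, X rs <= (X (false :: rs) + X (true :: rs)) / 2.
Hypothesis hmin : forall rs, X (false :: rs) = 2 * X rs - X rs * X rs.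

Definition Phi rs := X rs + X rs * X rs.
Definition ee rs := (Phi (false :: rs) + Phi (true :: rs)) / 2 - Phi rs.
Fixpoint Sf (rs : seq bool) : R := match rs with [::] => 0 | _ :: rs' => Sf rs' + ee rs' end.

Lemma ee_bound rs : (X (false :: rs) - X rs) ^ 2 <= 2 * ee rs /\ (X (true :: rs) - X rs) ^ 2 <= 2 * ee rs.
Proof.
have := hsub rs; have := h01 rs; rewrite /ee /Phi.
set p := X rs; set a := X (false :: rs); set b := X (true :: rs) => hp hs.
have huv : 0 <= (a - p) + (b - p) by lra.
have h : 0 <= p * ((a - p) + (b - p)) by apply: Rmult_le_pos; lra.
have E : 2 * ((a + a * a + (b + b * b)) / 2 - (p + p * p)) =
  ((a - p) + (b - p)) + 2 * (p * ((a - p) + (b - p))) + (a - p) ^ 2 + (b - p) ^ 2 by field.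
rewrite E.
have := pow2_ge_0 (a - p); have := pow2_ge_0 (b - p).
split; lra.
Qed.

Lemma ee_ge0 rs : 0 <= ee rs.
Proof. case: (ee_bound rs) => h _; have := pow2_ge_0 (X (false :: rs) - X rs); lra. Qed.

Lemma Sf_ge0 rs : 0 <= Sf rs.
Proof. elim: rs => [|b rs IH] /=; [lra | have := ee_ge0 rs; lra]. Qed.

Definition HK (K : R) (rs : seq bool) : bool := if Rle_dec K (Sf rs) then true else false.

Lemma markov K m rs : K * mu (HK K) rs m <= 2 - Phi rs + Sf rs.
Proof.
have hPhi : forall rs, 0 <= Phi rs <= 2 by move=> s; rewrite /Phi; have := h01 s; nra.
elim: m rs => [|m IH] rs /=; rewrite /HK; case: (Rle_dec K (Sf rs)) => h /=.
- have := hPhi rs; lra.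
- have := hPhi rs; have := Sf_ge0 rs; lra.
- have := hPhi rs; lra.
- have := IH (false :: rs); have := IH (true :: rs); rewrite /HK /= /ee; lra.
Qed.

Lemma good_path (omega : nat -> bool) K :
  (forall n, Sf (revpre omega n) < K) ->
  exists l, Un_cv (fun n => X (revpre omega n)) l /\ (l = 0 \/ l = 1).
Proof.
move=> hK.
apply: (@path_conv (fun n => X (revpre omega n)) (fun n => ee (revpre omega n)) K).
- move=> n; exact: h01.
- move=> n; exact: ee_ge0.
- move=> n /=; case: (ee_bound (revpre omega n)); by case: (omega n).
- move=> n; case: (ee_bound (revpre omega n)) => h _.
  apply: Rle_trans h; right; rewrite hmin; ring.
- move=> n; have -> : sum_f_R0 (fun n => ee (revpre omega n)) n = Sf (revpre omega n.+1).
    elim: n => [|n IH] /=; first lra.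
    by rewrite IH.
  by apply: Rlt_le.
Qed.

Lemma as_main : almost_surely (fun omega =>
    exists l, Un_cv (fun n => X (revpre omega n)) l /\ (l = 0 \/ l = 1)).
Proof.
move=> eps he.
pose K := 4 / eps.
have hK : 0 < K by rewrite /K; apply: Rdiv_lt_0_compat; lra.
have hmu : forall m, mu (HK K) [::] m <= eps / 2.
  move=> m; have := markov K m [::].
  have := h01 [::]; rewrite /Phi /= => hp hm.
  have h2 : K * mu (HK K) [::] m <= 2 by nra.
  have -> : eps / 2 = 2 / K by rewrite /K; field; lra.
  apply: (Rmult_le_reg_l K) => //.
  rewrite (_ : K * (2 / K) = 2) //; field; lra.
have [c [hc hs]] := cover hmu (ltac:(lra) : 0 < eps / 2).
exists c; split.
  move=> omega hbad; apply: hc.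
  apply: NNPP => hn; apply: hbad.
  apply: (@good_path omega K) => n.
  apply: Rnot_le_lt => hle; apply: hn; exists n.
  by rewrite /HK; case: (Rle_dec K _).
move=> N; have := hs N; lra.
Qed.

End Main.

Theorem lemma1 (Y : finType) (W V : bool -> Y -> R)
  (hW : is_BDMC W) (hV : is_BDMC V) :
  (* values in [0,1] *)
  (forall rs : seq bool, 0 <= Xr W V rs <= 1) /\
  (* submartingale: E[X_{n+1} | B_1..B_n] >= X_n *)
  (forall rs : seq bool,
      Xr W V rs <= (Xr W V (false :: rs) + Xr W V (true :: rs)) / 2) /\
  (* a.s. convergence to a limit in {0,1} *)
  almost_surely (fun omega =>
    exists l, Un_cv (fun n => Xr W V (revpre omega n)) l /\ (l = 0 \/ l = 1)).
Proof.
have h01 : forall rs, 0 <= Xr W V rs <= 1 by move=> rs; exact: Xr_01.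
have hsub : forall rs, Xr W V rs <= (Xr W V (false :: rs) + Xr W V (true :: rs)) / 2.
  move=> rs; rewrite (Xr_minus V hW); have := Xr_plus V hW rs; lra.
split; first exact: h01.
split; first exact: hsub.
apply: as_main => //.
move=> rs; exact: (Xr_minus V hW).
Qed.
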